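(* Let $R$ be a finite (associative, not necessarily unital) ring. (i) There exists $t\ge1$ such that $x^t=x^{2t}$ for all $x$ in $(R,\cdot)$, and there exists $t\ge1$ such that the $t$-th power of every element of $(R,\circ)$ equals its $2t$-th power in $(R,\circ)$. (ii) If all idempotents of $R$ are central, then $(R,\cdot)$ satisfies a reduced semigroup identity.
   Context: $(R,\circ)$ is $R$ with the operation $x\circ y=x+y+xy$ (powers in part (i) for $(R,\circ)$ are taken with respect to $\circ$). A semigroup identity is $u=v$ with $u\ne v$ words in a free semigroup holding under all substitutions; it is reduced if the first letters of $u,v$ differ and the last letters of $u,v$ differ. *)

(* Defs.v *)
From HB Require Import structures.
From mathcomp Require Import all_boot all_order all_algebra.
Set Implicit Arguments. Unset Strict Implicit. Unset Printing Implicit Defensive.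
Import GRing.Theory.
Local Open Scope ring_scope.

Definition is_rng (R : zmodType) (mul : R -> R -> R) : Prop :=
  [/\ forall x y z, mul x (mul y z) = mul (mul x y) z,
      forall x y z, mul x (y + z) = mul x y + mul x z &
      forall x y z, mul (x + y) z = mul x z + mul y z].

Definition circ (R : zmodType) (mul : R -> R -> R) (x y : R) : R :=
  x + y + mul x y.

(* Semigroup power: spow op x n = x^n (x op x op ... op x, n factors),
   meaningful for n >= 1. *)
Definition spow (T : Type) (op : T -> T -> T) (x : T) (n : nat) : T :=
  iter n.-1 (fun y => op y x) x.

(* Words of the free semigroup on variables indexed by nat: nonempty
   sequences of variables.  Evaluation under a substitution f. *)
Definition weval (T : Type) (op : T -> T -> T) (f : nat -> T) (w : seq nat) : T :=
  match w with
  | [::] => f 0%N (* unused: words are nonempty *)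
  | a :: w' => foldl (fun acc b => op acc (f b)) (f a) w'
  end.

Definition semigroup_identity (T : Type) (op : T -> T -> T) (u v : seq nat) : Prop :=
  [/\ u != [::], v != [::], u != v &
      forall f : nat -> T, weval op f u = weval op f v].

Definition reduced (u v : seq nat) : Prop :=
  head 0%N u != head 0%N v /\ last 0%N u != last 0%N v.

(* Main.v *)
Require Import Defs.
From HB Require Import structures.
From mathcomp Require Import all_boot all_order all_algebra.
From mathcomp Require Import zify.
Set Implicit Arguments. Unset Strict Implicit.
Import GRing.Theory.
Local Open Scope ring_scope.

Definition Pw (T : Type) (op : T -> T -> T) (x : T) (n : nat) : T :=
  iter n (fun y => op y x) x.

Lemma PwD (T : Type) (op : T -> T -> T)
  (opA : forall x y z, op x (op y z) = op (op x y) z) x a b :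
  Pw op x (a + b).+1 = op (Pw op x a) (Pw op x b).
Proof.
elim: b => [|b IH]; first by rewrite addn0.
by rewrite addnS /Pw iterS -/(Pw op x _) IH -opA.
Qed.

Lemma Pw_per (T : Type) (op : T -> T -> T)
  (opA : forall x y z, op x (op y z) = op (op x y) z) x a p :
  Pw op x a = Pw op x (a + p) ->
  forall k n, (a <= n)%N -> Pw op x n = Pw op x (n + k * p).
Proof.
move=> Hp.
have Hc : forall c, Pw op x (a + c) = Pw op x (a + p + c).
  case=> [|c]; first by rewrite !addn0.
  by rewrite !addnS !PwD // Hp.
elim=> [|k IH] n Han; first by rewrite mul0n addn0.
rewrite IH // mulSn.
have -> : (n + k * p = a + (n + k * p - a))%N by lia.
rewrite Hc; congr Pw; lia.
Qed.

Lemma fin_sg (T : finType) (op : T -> T -> T)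
  (opA : forall x y z, op x (op y z) = op (op x y) z) :
  exists2 t : nat, (1 <= t)%N & forall x : T, spow op x t = spow op x (2 * t).
Proof.
set N := #|T|.
exists (N.+1)`!; first exact: fact_gt0.
move=> x.
have [a [p [p0 apN Hap]]] : exists a p, [/\ (0 < p)%N, (a + p <= N)%N &
                                  Pw op x a = Pw op x (a + p)].
  have [/existsP [i /existsP [j /andP [/eqP Hij Hne]]] | Hn] :=
    boolP [exists i : 'I_N.+1, exists j : 'I_N.+1,
             (Pw op x i == Pw op x j) && (i != j)].
    have Hne' : (nat_of_ord i != nat_of_ord j) by [].
    move: (ltn_ord i) (ltn_ord j) Hij Hne'; rewrite /N.
    move: (nat_of_ord i) (nat_of_ord j) => ii jj hi hj Hij Hne'.
    case: (ltngtP ii jj) Hne' => Hl Hne'.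
    - exists ii, (jj - ii)%N; split; [lia|lia|].
      by rewrite Hij subnKC // ltnW.
    - exists jj, (ii - jj)%N; split; [lia|lia|].
      by rewrite -Hij subnKC // ltnW.
    - by move: Hne'.
  have inj : injective (fun i : 'I_N.+1 => Pw op x i).
    move=> i j Hf; apply/eqP; apply: contraT => Hne.
    case/negP: Hn; apply/existsP; exists i; apply/existsP; exists j.
    by rewrite Hf eqxx Hne.
  by move/leq_card: inj; rewrite card_ord ltnn.
have hd : (p %| (N.+1)`!)%N by apply: dvdn_fact; lia.
have hN : (N.+1 <= (N.+1)`!)%N by apply: dvdn_leq (fact_gt0 _) (dvdn_fact _); rewrite leqnn.
rewrite /spow -!/(Pw op x _).
rewrite (@Pw_per _ op opA x a p Hap ((N.+1)`! %/ p) ((N.+1)`!).-1); last by lia.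
congr Pw; rewrite divnK //; lia.
Qed.

Lemma circA (R : zmodType) (mul : R -> R -> R) (Hmul : is_rng mul) x y z :
  circ mul x (circ mul y z) = circ mul (circ mul x y) z.
Proof.
case: Hmul => HA HDr HDl.
rewrite /circ !HDr !HDl HA.
rewrite !addrA; congr (_ + _).
rewrite -!addrA; congr (_ + _); congr (_ + _).
rewrite [RHS]addrC -!addrA; congr (_ + _).
rewrite [RHS]addrC -!addrA; congr (_ + _).
Qed.

Lemma foldl_nseqP (T : Type) (op : T -> T -> T) (f : nat -> T) n b acc :
  foldl (fun acc c => op acc (f c)) acc (nseq n b) = iter n (fun y => op y (f b)) acc.
Proof. by elim: n acc => [|n IH] acc //; rewrite [LHS]/= IH iterSr. Qed.

Lemma iter_opP (T : Type) (op : T -> T -> T)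
  (opA : forall x y z, op x (op y z) = op (op x y) z) n z w :
  iter n.+1 (fun y => op y z) w = op w (iter n (fun y => op y z) z).
Proof. by elim: n => [|n IH] //; rewrite iterS IH /= opA. Qed.

Lemma weval_uv (T : Type) (op : T -> T -> T)
  (opA : forall x y z, op x (op y z) = op (op x y) z) (f : nat -> T) s a b :
  weval op f (nseq s.+1 a ++ nseq s.+1 b) = op (spow op (f a) s.+1) (spow op (f b) s.+1).
Proof.
rewrite /weval /= foldl_cat !foldl_nseqP.
change (b :: nseq s b) with (nseq s.+1 b); rewrite foldl_nseqP iter_opP //.
Qed.

Lemma last_nseqP (x y : nat) n : last x (nseq n y) = if n is 0 then x else y.
Proof. by elim: n x => [|n IH] x //=; rewrite IH; case: n {IH}. Qed.

Theorem proposition4p1 (R : finZmodType) (mul : R -> R -> R) (Hmul : is_rng mul) :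
  ((exists2 t : nat, (1 <= t)%N & forall x : R, spow mul x t = spow mul x (2 * t))
   /\ (exists2 t : nat, (1 <= t)%N &
         forall x : R, spow (circ mul) x t = spow (circ mul) x (2 * t)))
  /\ ((forall e : R, mul e e = e -> forall x : R, mul e x = mul x e) ->
      exists u v : seq nat, semigroup_identity mul u v /\ reduced u v).
Proof.
have HA : forall x y z, mul x (mul y z) = mul (mul x y) z by case: Hmul.
split; first split.
- exact: fin_sg.
- exact: fin_sg (circA Hmul).
move=> Hc.
have [t t1 Ht] := fin_sg HA.
case: t t1 Ht => [//|s] _ Ht.
exists (nseq s.+1 0%N ++ nseq s.+1 1%N), (nseq s.+1 1%N ++ nseq s.+1 0%N).
split.
  split => //.
  move=> f; rewrite !weval_uv //.
  apply: Hc; rewrite [X in _ = X]Ht.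
  have -> : (2 * s.+1 = (s + s).+2)%N by lia.
  rewrite /spow /= -!/(Pw mul _ _) -(PwD HA) //.
split; rewrite /= ?last_cat /= //; by rewrite !last_nseqP; case: s {Ht}.
Qed.
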